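(* Let $G$ be a graph and let $A$ and $B$ be two disjoint sets of vertices of $G$ with $|A|=|B|=t$, such that the vertices of $A$ are pairwise adjacent, the vertices of $B$ are pairwise adjacent, and for any two distinct vertices $w,z$ both in $A$ or both in $B$ we have $d(w,y)=d(z,y)$ for all $y\in V(G)\setminus\{w,z\}$. Then $rvcl(G)\geq t+1$.
   Context: All graphs are finite, simple, connected and undirected; $d$ denotes graph distance. For a graph $G$ and $k\in\mathbb{N}$, a rainbow vertex $k$-coloring of $G$ is a map $c:V(G)\to\{1,\dots,k\}$ such that every two vertices $u,v$ are joined by a path whose internal vertices all receive distinct colors. For such a coloring let $R_i=c^{-1}(i)$ and $\Pi=(R_1,\dots,R_k)$; the rainbow code of $v$ is $rc_\Pi(v)=(d(v,R_1),\dots,d(v,R_k))$ where $d(v,R_i)=\min_{x\in R_i}d(v,x)$. A rainbow vertex $k$-coloring is a locating rainbow $k$-coloring if distinct vertices have distinct rainbow codes. The locating rainbow connection number $rvcl(G)$ is the least $k$ for which $G$ has a locating rainbow $k$-coloring. *)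

(* Defs.v *)
From mathcomp Require Import all_boot.
Set Implicit Arguments. Unset Strict Implicit. Unset Printing Implicit Defensive.

Definition simple_graph (T : finType) (e : rel T) : Prop :=
  symmetric e /\ irreflexive e.

Definition connected_graph (T : finType) (e : rel T) : Prop :=
  0 < #|T| /\ forall u v : T, connect e u v.

Fixpoint ball (T : finType) (e : rel T) (n : nat) (u : T) : {set T} :=
  match n with
  | 0 => [set u]
  | n'.+1 => ball e n' u :|: [set y | [exists x in ball e n' u, e x y]]
  end.

(* graph distance d(u,v): least n with v in ball n u (= #|T| if unreachable,
   which never happens in a connected graph). *)
Definition dist (T : finType) (e : rel T) (u v : T) : nat :=
  find (fun n => v \in ball e n u) (iota 0 #|T|).

(* d(v,R) = min_{x in R} d(v,x); empty R gives the sentinel #|T|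
   (larger than every actual distance, playing the role of infinity). *)
Definition dist_set (T : finType) (e : rel T) (v : T) (R : {set T}) : nat :=
  \big[minn/#|T|]_(x in R) dist e v x.

(* a u-v path x0=u, x1, ..., xm=v given as u :: p, internal vertices
   are all but the last element of p *)
Definition is_path (T : finType) (e : rel T) (u v : T) (p : seq T) : bool :=
  [&& path e u p, last u p == v & uniq (u :: p)].

Definition internal (T : Type) (p : seq T) : seq T := take (size p).-1 p.

Definition rainbow_vertex_coloring (T : finType) (e : rel T) (k : nat)
    (c : T -> 'I_k) : Prop :=
  forall u v : T, exists p : seq T,
    is_path e u v p /\ uniq (map c (internal p)).

Definition color_class (T : finType) (k : nat) (c : T -> 'I_k) (i : 'I_k)
  : {set T} := [set x | c x == i].

Definition rainbow_code (T : finType) (e : rel T) (k : nat) (c : T -> 'I_k)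
    (v : T) : {ffun 'I_k -> nat} :=
  [ffun i => dist_set e v (color_class c i)].

Definition locating_rainbow_coloring (T : finType) (e : rel T) (k : nat)
    (c : T -> 'I_k) : Prop :=
  rainbow_vertex_coloring e c /\
  forall u v : T, u != v -> rainbow_code e c u != rainbow_code e c v.

(* Main.v *)
Require Import Defs.
From mathcomp Require Import all_boot.

Section L.
Variables (T : finType) (e : rel T).

Lemma cardT_pos (u : T) : 0 < #|T|.
Proof. by apply/card_gt0P; exists u. Qed.

Lemma dist_self u : dist e u u = 0.
Proof.
rewrite /dist; have := cardT_pos u; case: #|T| => // n _ /=.
by rewrite in_set1 eqxx.
Qed.

Lemma dist_eq0 u v : dist e u v = 0 -> v = u.
Proof.
rewrite /dist; have := cardT_pos u; case: #|T| => // n _ /=.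
by case: ifP => // /=; rewrite in_set1 => /eqP.
Qed.

Lemma dist_adj u v : e u v -> u != v -> dist e u v = 1.
Proof.
move=> euv nuv.
have h2 : 1 < #|T|.
  have := max_card (mem [set u; v]); rewrite cards2 nuv; exact.
rewrite /dist; move: h2; case: #|T| => // [] [] // n _ /=.
rewrite in_set1 eq_sym (negbTE nuv) /= in_setU in_set1 eq_sym (negbTE nuv) /=.
rewrite inE; case: ifP => //; move/negbT/existsP; case; exists u.
by rewrite in_set1 eqxx euv.
Qed.

Lemma bigmin_le (I : eqType) (r : seq I) (P : pred I) (F : I -> nat) d x :
  x \in r -> P x -> \big[minn/d]_(i <- r | P i) F i <= F x.
Proof.
elim: r => // y r IH; rewrite inE big_cons => /orP [/eqP<-|xr] Px.
  by rewrite Px geq_minl.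
case: ifP => _; last exact: IH.
by rewrite geq_min IH ?orbT.
Qed.

Lemma dist_set_le v (R : {set T}) x : x \in R -> dist_set e v R <= dist e v x.
Proof. by move=> xR; rewrite /dist_set bigmin_le ?mem_index_enum. Qed.

Lemma dist_set_0 v (R : {set T}) : v \in R -> dist_set e v R = 0.
Proof. by move=> vR; apply/eqP; rewrite -leqn0 -(dist_self v) dist_set_le. Qed.

Lemma dist_set_ge1 v (R : {set T}) : v \notin R -> 1 <= dist_set e v R.
Proof.
move=> vR; rewrite /dist_set; apply: (big_ind (fun n => 1 <= n)).
- exact: cardT_pos v.
- by move=> a b ha hb; rewrite leq_min ha hb.
- move=> x xR; rewrite lt0n; apply/negP=> /eqP/dist_eq0 h.
  by subst x; rewrite xR in vR.
Qed.
End L.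

Theorem lemma3 (T : finType) (e : rel T) (A B : {set T}) (t : nat) :
  simple_graph e -> connected_graph e ->
  [disjoint A & B] -> #|A| = t -> #|B| = t ->
  (forall w z, w \in A -> z \in A -> w != z -> e w z) ->
  (forall w z, w \in B -> z \in B -> w != z -> e w z) ->
  (forall w z, w \in A -> z \in A -> w != z ->
     forall y, y != w -> y != z -> dist e w y = dist e z y) ->
  (forall w z, w \in B -> z \in B -> w != z ->
     forall y, y != w -> y != z -> dist e w y = dist e z y) ->
  forall (k : nat) (c : T -> 'I_k), locating_rainbow_coloring e c -> t.+1 <= k.
Proof.
move=> _ [T0 _] dAB cA cB eA eB tA tB k c [_ loc].
have inj : forall S : {set T},
  (forall w z, w \in S -> z \in S -> w != z ->
     forall y, y != w -> y != z -> dist e w y = dist e z y) ->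
  {in S &, injective c}.
  move=> S tS w z wS zS cwz; apply/eqP; apply/negPn/negP => nwz.
  apply: (negP (loc w z nwz)); apply/eqP/ffunP => i; rewrite !ffunE.
  case: (boolP (c w == i)) => hi.
  - rewrite !dist_set_0 // inE -?cwz //.
  - rewrite /dist_set; apply: eq_bigr => x; rewrite inE => /eqP cx.
    apply: tS => //; apply/eqP => h; subst x; by move: hi; rewrite -cx ?cwz eqxx.
have injA := inj A tA; have injB := inj B tB.
have ktA : t <= k.
  by rewrite -cA -(card_in_imset injA); apply: leq_trans (max_card _) _; rewrite card_ord.
rewrite ltn_neqAle ktA andbT; apply/eqP => tk; subst k.
have fullA : c @: A = [set: 'I_t].
  by apply/eqP; rewrite eqEcard subsetT cardsT card_ord (card_in_imset injA) cA.
have fullB : c @: B = [set: 'I_t].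
  by apply/eqP; rewrite eqEcard subsetT cardsT card_ord (card_in_imset injB) cB.
destruct t as [|t'].
  by move: T0 => /card_gt0P [u _]; case: (c u).
have : ord0 \in c @: A by rewrite fullA inE.
case/imsetP => a aA ca.
have : ord0 \in c @: B by rewrite fullB inE.
case/imsetP => b bB cb.
have nab : a != b.
  apply/negP => /eqP h; subst b.
  by move: dAB; rewrite disjoint_subset => /subsetP /(_ a aA); rewrite inE bB.
have code : forall S : {set T}, c @: S = [set: 'I_t'.+1] ->
   (forall w z, w \in S -> z \in S -> w != z -> e w z) ->
   {in S &, injective c} ->
   forall x, x \in S -> forall i,
   dist_set e x (color_class c i) = (c x != i).
  move=> S fS cS iS x xS i; case: (boolP (c x == i)) => hi /=.
    by rewrite dist_set_0 // inE.
  have : i \in c @: S by rewrite fS inE.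
  case/imsetP => y yS eqi; subst i.
  have nxy : x != y by apply: contraNneq hi => ->.
  apply/eqP; rewrite eqn_leq dist_set_ge1 ?inE // andbT.
  by rewrite -(@dist_adj _ _ _ _ (cS _ _ xS yS nxy) nxy) dist_set_le // inE.
apply: (negP (loc a b nab)); apply/eqP/ffunP => i; rewrite !ffunE.
by rewrite (code A fullA eA injA a aA) (code B fullB eB injB b bB) -ca -cb.
Qed.
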